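(* Let $p\ge0$, $(\kappa_i)$ with $C^{-1}i^{-p}\le\kappa_i\le Ci^{-p}$, $\mu_0\in\ell_2$, and constants $0<l<L$. Define \[ h_n(\alpha)=\frac{1+2\alpha+2p}{n^{1/(1+2\alpha+2p)}\log n}\sum_{i=1}^{\infty}\frac{n^2 i^{1+2\alpha}\mu_{0,i}^2\log i}{(i^{1+2\alpha}\kappa_i^{-2}+n)^2}, \] $\underline{\alpha}_n=\inf\{\alpha>0:h_n(\alpha)>l\}\wedge\sqrt{\log n}$ and $\overline{\alpha}_n=\inf\{\alpha>0:h_n(\alpha)>L(\log n)^2\}$. Then, with constants not depending on $n$, $\alpha$ or $\mu_0$, \[ h_n(\alpha)\gtrsim h_n(\overline{\alpha}_n)\quad\text{for }\alpha\in\Big[\overline{\alpha}_n-\frac1{\log n},\overline{\alpha}_n\Big]\text{ and }n\ge e^4, \] \[ h_n(\alpha)\lesssim h_n(\underline{\alpha}_n)\quad\text{for }\alpha\in\Big[\underline{\alpha}_n,\underline{\alpha}_n+\frac1{\log n}\Big]\text{ and }n\ge e^2. \]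
   Context: $a\lesssim b$ means $a\le Kb$ for a constant $K>0$; $a\gtrsim b$ means $b\lesssim a$. Infimum of the empty set is $+\infty$. *)

(* Defs.v *)
From Stdlib Require Import Reals Lra.
From Coquelicot Require Import Coquelicot.
Open Scope R_scope.

(* The i-th summand of h_n(alpha), for i >= 1 (sequences kappa, mu0 are
   indexed from 1; the value at index 0 is ignored). *)
Definition h_term (kappa mu0 : nat -> R) (n alpha : R) (i : nat) : R :=
  let x := INR i in
  n ^ 2 * Rpower x (1 + 2 * alpha) * (mu0 i) ^ 2 * ln x
  / (Rpower x (1 + 2 * alpha) * / (kappa i) ^ 2 + n) ^ 2.

Definition h_n (p : R) (kappa mu0 : nat -> R) (n alpha : R) : R :=
  (1 + 2 * alpha + 2 * p) / (Rpower n (1 / (1 + 2 * alpha + 2 * p)) * ln n)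
  * Series (fun k => h_term kappa mu0 n alpha (S k)).

(* Infimum in extended reals; Glb_Rbar of the empty set is p_infty. *)
Definition alpha_low (p : R) (kappa mu0 : nat -> R) (l n : R) : R :=
  real (Rbar_min (Glb_Rbar (fun a => 0 < a /\ h_n p kappa mu0 n a > l))
                 (Finite (sqrt (ln n)))).

Definition alpha_up (p : R) (kappa mu0 : nat -> R) (L n : R) : Rbar :=
  Glb_Rbar (fun a => 0 < a /\ h_n p kappa mu0 n a > L * (ln n) ^ 2).

(* Main.v *)
Require Import Defs.
From Stdlib Require Import Reals Lra.
From Coquelicot Require Import Coquelicot.
From Stdlib Require Import Psatz.
Open Scope R_scope.

Lemma exp_mono (x y : R) : x <= y -> exp x <= exp y.
Proof.
  intro H; destruct (Rle_lt_or_eq_dec x y H) as [h|h].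
  - left; apply exp_increasing; exact h.
  - subst; lra.
Qed.

Lemma g_cmp (X0 X1 c N : R) : 0 < X0 -> X0 <= X1 -> 0 < c -> 0 < N ->
  X1 / (X1*c+N)^2 <= X0/(X0*c+N)^2 * (X1/X0).
Proof.
  intros h0 h1 hc hN.
  replace (X0/(X0*c+N)^2 * (X1/X0)) with (X1 / (X0*c+N)^2) by (field; nra).
  unfold Rdiv. apply Rmult_le_compat_l; [lra|].
  apply Rinv_le_contravar; [apply pow_lt; nra|].
  assert (0 <= X0*c+N) by nra. assert (X0*c+N <= X1*c+N) by nra. apply pow_incr; lra.
Qed.

Lemma g_dec (X0 X1 c N : R) : 0 < X0 -> X0 <= X1 -> 0 < c -> 0 < N ->
  N <= X0 * c -> X1 / (X1*c+N)^2 <= X0/(X0*c+N)^2.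
Proof.
  intros h0 h1 hc hN hb.
  assert (HA : 0 < (X1*c+N)^2) by (apply pow_lt; nra).
  assert (HB : 0 < (X0*c+N)^2) by (apply pow_lt; nra).
  assert (key : X1 * (X0*c+N)^2 <= X0 * (X1*c+N)^2).
  { assert (E : X0 * (X1*c+N)^2 - X1 * (X0*c+N)^2 = (X1 - X0) * (X0*X1*c^2 - N^2)) by ring.
    assert (0 <= (X1 - X0) * (X0*X1*c^2 - N^2)).
    { apply Rmult_le_pos; [lra|]. assert (N <= X1 * c) by nra. nra. }
    lra. }
  replace (X1 / (X1*c+N)^2) with (X1 * (X0*c+N)^2 * / ((X1*c+N)^2 * (X0*c+N)^2)) by (field; nra).
  replace (X0 / (X0*c+N)^2) with (X0 * (X1*c+N)^2 * / ((X1*c+N)^2 * (X0*c+N)^2)) by (field; nra).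
  apply Rmult_le_compat_r; [left; apply Rinv_0_lt_compat; nra | exact key].
Qed.

Lemma term_eq (kappa mu0 : nat -> R) (N a : R) (i : nat) :
  h_term kappa mu0 N a i =
  N^2 * (mu0 i)^2 * ln (INR i) *
  (Rpower (INR i) (1 + 2*a) / (Rpower (INR i) (1 + 2*a) * / (kappa i)^2 + N)^2).
Proof. unfold h_term, Rdiv; simpl; ring. Qed.

Lemma Rpower_pos (x y : R) : 0 < Rpower x y.
Proof. unfold Rpower; apply exp_pos. Qed.

Lemma term_cmp (p C : R) (kappa mu0 : nat -> R) (N a0 d : R) (i : nat) :
  0 < C -> 0 <= p -> (1 <= i)%nat ->
  / C * Rpower (INR i) (- p) <= kappa i <= C * Rpower (INR i) (- p) ->
  0 < N -> 2 <= ln N -> 0 <= d -> d * ln N <= 1 -> 1/2 <= 1 + 2*a0 + 2*p ->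
  0 <= h_term kappa mu0 N (a0 + d) i <=
    exp (4 + 4 * Rabs (ln C)) * h_term kappa mu0 N a0 i.
Proof.
  intros hC hp hi hk hN hlN hd hdN hs.
  assert (hx : 1 <= INR i) by (apply (le_INR 1); exact hi).
  set (x := INR i) in *.
  assert (hkp : 0 < kappa i).
  { apply Rlt_le_trans with (2 := proj1 hk). apply Rmult_lt_0_compat;
    [apply Rinv_0_lt_compat; lra | apply Rpower_pos]. }
  assert (hl : 0 <= ln x) by (rewrite <- ln_1; apply ln_le; lra).
  rewrite !term_eq. fold x.
  set (X0 := Rpower x (1 + 2*a0)).
  set (E := Rpower x (2*d)).
  assert (hX1 : Rpower x (1 + 2*(a0+d)) = X0 * E).
  { unfold X0, E; rewrite <- Rpower_plus; f_equal; ring. }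
  rewrite hX1.
  assert (hX0 : 0 < X0) by apply Rpower_pos.
  assert (hE : 1 <= E).
  { unfold E. rewrite <- (Rpower_O x) by lra. apply Rle_Rpower; lra. }
  set (c := / (kappa i)^2).
  assert (hc : 0 < c) by (apply Rinv_0_lt_compat; apply pow_lt; lra).
  set (A := N^2 * (mu0 i)^2 * ln x).
  assert (hA : 0 <= A).
  { unfold A. apply Rmult_le_pos; [|exact hl].
    apply Rmult_le_pos; apply pow2_ge_0. }
  assert (hB : 1 <= exp (4 + 4 * Rabs (ln C))).
  { rewrite <- exp_0. apply exp_mono. pose proof (Rabs_pos (ln C)). lra. }
  assert (hX0c : 0 < X0 * c) by (apply Rmult_lt_0_compat; lra).
  assert (hX1c : 0 < X0 * E * c) by (apply Rmult_lt_0_compat; [apply Rmult_lt_0_compat|]; lra).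
  assert (hg0 : 0 <= X0 / (X0 * c + N)^2).
  { unfold Rdiv. apply Rmult_le_pos; [lra|]. left; apply Rinv_0_lt_compat, pow_lt; lra. }
  assert (hg1 : 0 <= X0 * E / (X0 * E * c + N)^2).
  { unfold Rdiv. apply Rmult_le_pos; [nra|]. left; apply Rinv_0_lt_compat, pow_lt; lra. }
  split; [apply Rmult_le_pos; assumption|].
  destruct (Rle_or_lt N (X0 * c)) as [Hc|Hc].
  - pose proof (g_dec X0 (X0*E) c N hX0 ltac:(nra) hc hN Hc).
    apply Rle_trans with (A * (X0 / (X0 * c + N)^2)).
    + apply Rmult_le_compat_l; assumption.
    + pose proof (Rmult_le_pos _ _ hA hg0). nra.
  - pose proof (g_cmp X0 (X0*E) c N hX0 ltac:(nra) hc hN) as G.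
    replace (X0 * E / X0) with E in G by (field; lra).
    assert (EB : E <= exp (4 + 4 * Rabs (ln C))).
    { unfold E, Rpower. apply exp_mono.
      assert (L1 : ln (X0 * c) < ln N) by (apply ln_increasing; nra).
      rewrite ln_mult in L1 by lra.
      unfold X0 in L1; rewrite ln_Rpower in L1.
      unfold c in L1; rewrite ln_Rinv in L1 by (apply pow_lt; lra).
      replace ((kappa i)^2) with (kappa i * kappa i) in L1 by ring.
      rewrite ln_mult in L1 by lra.
      assert (L2 : ln (kappa i) <= ln C + - p * ln x).
      { rewrite <- ln_Rpower. rewrite <- ln_mult by (try lra; apply Rpower_pos).
        apply ln_le; [lra| exact (proj2 hk)]. }
      pose proof (Rle_abs (ln C)) as Ha.
      pose proof (Rabs_pos (ln C)) as Ha0.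
      set (s0 := 1 + 2*a0 + 2*p) in *.
      assert (L3 : s0 * ln x < ln N + 2 * Rabs (ln C)) by (unfold s0; nra).
      assert (L4 : ln x < 2 * (ln N + 2 * Rabs (ln C))) by nra.
      assert (L5 : d <= 1/2) by nra.
      assert (L6 : 2 * d * ln x <= 2 * d * (2 * (ln N + 2 * Rabs (ln C)))) by nra.
      nra. }
    apply Rle_trans with (A * (X0 / (X0 * c + N)^2 * E)).
    + apply Rmult_le_compat_l; assumption.
    + pose proof (Rmult_le_pos _ _ hA hg0).
      replace (A * (X0 / (X0 * c + N) ^ 2 * E)) with ((A * (X0 / (X0 * c + N) ^ 2)) * E) by ring.
      replace (exp (4 + 4 * Rabs (ln C)) * (A * (X0 / (X0 * c + N) ^ 2)))
        with ((A * (X0 / (X0 * c + N) ^ 2)) * exp (4 + 4 * Rabs (ln C))) by ring.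
      apply Rmult_le_compat_l; assumption.
Qed.

Lemma term_sum (p C : R) (kappa mu0 : nat -> R) (N a0 : R) :
  0 < C -> 0 <= p ->
  (forall i : nat, (1 <= i)%nat ->
     / C * Rpower (INR i) (- p) <= kappa i <= C * Rpower (INR i) (- p)) ->
  0 < N -> 1/2 <= 1 + 2*a0 ->
  ex_series (fun k => (mu0 (S k)) ^ 2) ->
  ex_series (fun k => h_term kappa mu0 N a0 (S k)).
Proof.
  intros hC hp hkap hN ha hmu.
  apply (@ex_series_le R_AbsRing R_CompleteNormedModule _ (fun k => (2 * N^2 * C^4) * (mu0 (S k))^2)).
  2: { exact (@ex_series_scal_l R_AbsRing R_NormedModule (2 * N^2 * C^4) _ hmu). }
  intro k. change (norm ?z) with (Rabs z).
  assert (hi : (1 <= S k)%nat) by lia.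
  pose proof (hkap _ hi) as hk.
  assert (hx : 1 <= INR (S k)) by (apply (le_INR 1); exact hi).
  set (x := INR (S k)) in *.
  assert (hkp : 0 < kappa (S k)).
  { apply Rlt_le_trans with (2 := proj1 hk). apply Rmult_lt_0_compat;
    [apply Rinv_0_lt_compat; lra | apply Rpower_pos]. }
  assert (hl : 0 <= ln x) by (rewrite <- ln_1; apply ln_le; lra).
  rewrite term_eq. fold x.
  set (X0 := Rpower x (1 + 2*a0)).
  assert (hX0 : 0 < X0) by apply Rpower_pos.
  set (c := / (kappa (S k))^2).
  assert (hc : 0 < c) by (apply Rinv_0_lt_compat; apply pow_lt; lra).
  assert (hX0c : 0 < X0 * c) by (apply Rmult_lt_0_compat; lra).
  assert (hD : 0 < (X0 * c + N)^2) by (apply pow_lt; lra).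
  assert (hg0 : 0 <= X0 / (X0 * c + N)^2).
  { unfold Rdiv. apply Rmult_le_pos; [lra|]. left; apply Rinv_0_lt_compat; lra. }
  assert (hA : 0 <= N^2 * (mu0 (S k))^2 * ln x).
  { apply Rmult_le_pos; [|exact hl]. apply Rmult_le_pos; apply pow2_ge_0. }
  rewrite Rabs_pos_eq by (apply Rmult_le_pos; assumption).
  assert (hkC : kappa (S k) <= C).
  { assert (Rpower x (-p) <= 1).
    { rewrite <- (Rpower_O x) by lra. apply Rle_Rpower; lra. }
    pose proof (Rpower_pos x (-p)). nra. }
  assert (hk4 : kappa (S k) ^ 4 <= C ^ 4) by (apply pow_incr; lra).
  assert (hlx : ln x <= 2 * X0).
  { unfold X0, Rpower. pose proof (exp_ineq1_le ((1 + 2 * a0) * ln x)). nra. }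
  assert (hkc : kappa (S k) ^ 4 * c^2 = 1).
  { unfold c. field. lra. }
  assert (key : ln x * (X0 / (X0 * c + N)^2) <= 2 * kappa (S k) ^ 4).
  { assert (K1 : ln x * X0 <= 2 * kappa (S k) ^ 4 * (X0 * c + N)^2).
    { assert (K2 : (X0*c)^2 <= (X0 * c + N)^2) by (apply pow_incr; lra).
      assert (K3 : 2 * kappa (S k) ^ 4 * (X0*c)^2 = 2 * X0^2).
      { replace (2 * kappa (S k) ^ 4 * (X0*c)^2) with (2 * X0^2 * (kappa (S k) ^ 4 * c^2)) by ring.
        rewrite hkc; ring. }
      assert (K4 : 0 <= kappa (S k) ^ 4) by (apply pow_le; lra).
      nra. }
    replace (ln x * (X0 / (X0 * c + N)^2)) with ((ln x * X0) * / (X0 * c + N)^2) by (field; lra).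
    replace (2 * kappa (S k) ^ 4) with ((2 * kappa (S k) ^ 4 * (X0 * c + N)^2) * / (X0 * c + N)^2) by (field; lra).
    apply Rmult_le_compat_r; [left; apply Rinv_0_lt_compat; lra| exact K1]. }
  assert (hB : 0 <= N^2 * (mu0 (S k))^2) by (apply Rmult_le_pos; apply pow2_ge_0).
  replace (N ^ 2 * mu0 (S k) ^ 2 * ln x * (X0 / (X0 * c + N) ^ 2))
    with ((N ^ 2 * mu0 (S k) ^ 2) * (ln x * (X0 / (X0 * c + N) ^ 2))) by ring.
  replace (2 * N ^ 2 * C ^ 4 * mu0 (S k) ^ 2) with ((N ^ 2 * mu0 (S k) ^ 2) * (2 * C^4)) by ring.
  apply Rmult_le_compat_l; [exact hB| lra].
Qed.

Lemma Series_nonneg0 (a : nat -> R) : (forall k, 0 <= a k) -> ex_series a -> 0 <= Series a.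
Proof.
  intros h e.
  assert (Z : Series (fun _ => 0) = 0).
  { rewrite (Series_ext (fun _ => 0) (fun n => 0 * 0)) by (intro; ring).
    rewrite Series_scal_l. ring. }
  rewrite <- Z. apply Series_le; [|exact e]. intro k; split; [lra| apply h].
Qed.

Lemma core (p C : R) (kappa mu0 : nat -> R) (N a0 d : R) :
  0 < C -> 0 <= p ->
  (forall i : nat, (1 <= i)%nat ->
     / C * Rpower (INR i) (- p) <= kappa i <= C * Rpower (INR i) (- p)) ->
  ex_series (fun k => (mu0 (S k)) ^ 2) ->
  0 < N -> 2 <= ln N -> 0 <= d -> d * ln N <= 1 -> 1/2 <= 1 + 2*a0 ->
  2 * d <= 1 + 2*a0 + 2*p ->
  h_n p kappa mu0 N (a0 + d) <=
    (2 * exp 8 * exp (4 + 4 * Rabs (ln C))) * h_n p kappa mu0 N a0.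
Proof.
  intros hC hp hkap hmu hN hlN hd hdN ha hds.
  set (B := exp (4 + 4 * Rabs (ln C))).
  assert (hB : 0 < B) by apply exp_pos.
  pose proof (term_sum p C kappa mu0 N a0 hC hp hkap hN ha hmu) as ex0.
  assert (exB : ex_series (fun k => B * h_term kappa mu0 N a0 (S k))).
  { exact (@ex_series_scal_l R_AbsRing R_NormedModule B _ ex0). }
  assert (tc : forall k, 0 <= h_term kappa mu0 N (a0 + d) (S k) <= B * h_term kappa mu0 N a0 (S k)).
  { intro k. apply (term_cmp p C); try assumption; try lia; try lra.
    apply hkap; lia. }
  assert (t0 : forall k, 0 <= h_term kappa mu0 N a0 (S k)).
  { intro k. pose proof (term_cmp p C kappa mu0 N a0 0 (S k) hC hp ltac:(lia) (hkap (S k) ltac:(lia))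
      hN hlN ltac:(lra) ltac:(lra) ltac:(lra)) as [H1 _].
    rewrite Rplus_0_r in H1. exact H1. }
  assert (S1le : Series (fun k => h_term kappa mu0 N (a0 + d) (S k)) <=
                 B * Series (fun k => h_term kappa mu0 N a0 (S k))).
  { rewrite <- Series_scal_l. apply Series_le; assumption. }
  assert (S0pos : 0 <= Series (fun k => h_term kappa mu0 N a0 (S k)))
    by (apply Series_nonneg0; assumption).
  unfold h_n.
  set (S0 := Series (fun k => h_term kappa mu0 N a0 (S k))) in *.
  set (S1 := Series (fun k => h_term kappa mu0 N (a0 + d) (S k))) in *.
  set (s0 := 1 + 2 * a0 + 2 * p) in *.
  replace (1 + 2 * (a0 + d) + 2 * p) with (s0 + 2 * d) by (unfold s0; ring).
  set (s1 := s0 + 2 * d).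
  assert (hs0 : 1/2 <= s0) by (unfold s0; lra).
  assert (hs1 : s0 <= s1) by (unfold s1; lra).
  assert (hs12 : s1 <= 2 * s0) by (unfold s1; lra).
  unfold Rpower.
  set (lN := ln N) in *.
  set (e0 := exp (1 / s0 * lN)).
  set (e1 := exp (1 / s1 * lN)).
  assert (he0 : 0 < e0) by apply exp_pos.
  assert (he1 : 0 < e1) by apply exp_pos.
  assert (hee : e0 <= exp 8 * e1).
  { unfold e0, e1. rewrite <- exp_plus. apply exp_mono.
    assert (F : 1 / s0 * lN - 1 / s1 * lN = (2 * d * lN) * / (s0 * s1)) by (unfold s1; field; lra).
    assert (F1 : / (s0 * s1) <= 4).
    { replace 4 with (/ (1/4)) by field. apply Rinv_le_contravar; [lra| nra]. }
    assert (F2 : 0 <= / (s0 * s1)) by (left; apply Rinv_0_lt_compat; nra).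
    assert (F3 : 0 <= 2 * d * lN) by nra.
    assert ((2 * d * lN) * / (s0 * s1) <= 2 * 4) by (apply Rmult_le_compat; lra).
    lra. }
  assert (hP : s1 / (e1 * lN) <= 2 * exp 8 * (s0 / (e0 * lN))).
  { assert (K : s1 * e0 <= 2 * exp 8 * s0 * e1).
    { pose proof (exp_pos 8). nra. }
    replace (s1 / (e1 * lN)) with ((s1 * e0) * / (e0 * e1 * lN)) by (field; lra).
    replace (2 * exp 8 * (s0 / (e0 * lN))) with ((2 * exp 8 * s0 * e1) * / (e0 * e1 * lN)) by (field; lra).
    apply Rmult_le_compat_r; [left; apply Rinv_0_lt_compat; apply Rmult_lt_0_compat; [nra|lra] | exact K]. }
  assert (hP1 : 0 <= s1 / (e1 * lN)).
  { unfold Rdiv. apply Rmult_le_pos; [lra|]. left; apply Rinv_0_lt_compat; nra. }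
  apply Rle_trans with (s1 / (e1 * lN) * (B * S0)).
  - apply Rmult_le_compat_l; assumption.
  - replace (2 * exp 8 * B * (s0 / (e0 * lN) * S0)) with ((2 * exp 8 * (s0 / (e0 * lN))) * (B * S0)) by ring.
    apply Rmult_le_compat_r; [nra| exact hP].
Qed.

Lemma glb_nonneg (P : R -> Prop) :
  Rbar_le (Finite 0) (Glb_Rbar (fun a => 0 < a /\ P a)).
Proof.
  apply (proj2 (Glb_Rbar_correct _)). intros x [hx _]. simpl. lra.
Qed.

Lemma lemma5p1
  (p C : R) (kappa : nat -> R) (l L : R)
  (hp : 0 <= p) (hC : 0 < C)
  (hkappa : forall i : nat, (1 <= i)%nat ->
     / C * Rpower (INR i) (- p) <= kappa i <= C * Rpower (INR i) (- p))
  (hl : 0 < l) (hlL : l < L) :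
  exists K : R, 0 < K /\
  forall mu0 : nat -> R,
    ex_series (fun k => (mu0 (S k)) ^ 2) ->
    forall n : nat,
      (exp 4 <= INR n ->
        forall abar : R, alpha_up p kappa mu0 L (INR n) = Finite abar ->
        forall alpha : R, abar - 1 / ln (INR n) <= alpha <= abar ->
          h_n p kappa mu0 (INR n) abar
            <= K * h_n p kappa mu0 (INR n) alpha) /\
      (exp 2 <= INR n ->
        forall alpha : R,
          alpha_low p kappa mu0 l (INR n) <= alpha
            <= alpha_low p kappa mu0 l (INR n) + 1 / ln (INR n) ->
          h_n p kappa mu0 (INR n) alpha
            <= K * h_n p kappa mu0 (INR n) (alpha_low p kappa mu0 l (INR n))).
Proof.
  exists (2 * exp 8 * exp (4 + 4 * Rabs (ln C))).
  split.
  { pose proof (exp_pos 8). pose proof (exp_pos (4 + 4 * Rabs (ln C))). nra. }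
  intros mu0 hmu n. split.
  - intros hn abar habar alpha [h1 h2].
    set (N := INR n) in *.
    assert (hN : 0 < N) by (pose proof (exp_pos 4); lra).
    assert (hlN : 4 <= ln N) by (rewrite <- (ln_exp 4); apply ln_le; [apply exp_pos | exact hn]).
    assert (ha : 0 <= abar).
    { pose proof (glb_nonneg (fun a => h_n p kappa mu0 N a > L * (ln N) ^ 2)) as G.
      change (Rbar_le (Finite 0) (alpha_up p kappa mu0 L N)) in G. rewrite habar in G. exact G. }
    assert (hi : 1 / ln N <= 1/4).
    { unfold Rdiv. rewrite !Rmult_1_l. apply Rinv_le_contravar; lra. }
    assert (hi0 : 0 < 1 / ln N) by (unfold Rdiv; rewrite Rmult_1_l; apply Rinv_0_lt_compat; lra).
    set (d := abar - alpha).
    assert (hdN : d * ln N <= 1).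
    { assert (E1 : 1 / ln N * ln N = 1) by (field; lra).
      assert (E2 : d <= 1 / ln N) by (unfold d; lra).
      nra. }
    replace abar with (alpha + d) by (unfold d; ring).
    apply (core p C); try assumption; unfold d; lra.
  - intros hn alpha [h1 h2].
    set (N := INR n) in *.
    assert (hN : 0 < N) by (pose proof (exp_pos 2); lra).
    assert (hlN : 2 <= ln N) by (rewrite <- (ln_exp 2); apply ln_le; [apply exp_pos | exact hn]).
    set (a0 := alpha_low p kappa mu0 l N) in *.
    assert (ha : 0 <= a0).
    { unfold a0, alpha_low.
      pose proof (glb_nonneg (fun a => h_n p kappa mu0 N a > l)) as G.
      pose proof (sqrt_pos (ln N)) as Sq.
      destruct (Glb_Rbar (fun a => 0 < a /\ h_n p kappa mu0 N a > l)) as [g| |];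
        simpl in G |- *; try lra; try contradiction.
      apply Rmin_glb; lra. }
    assert (hi : 1 / ln N <= 1/2).
    { unfold Rdiv. rewrite !Rmult_1_l. apply Rinv_le_contravar; lra. }
    assert (hi0 : 0 < 1 / ln N) by (unfold Rdiv; rewrite Rmult_1_l; apply Rinv_0_lt_compat; lra).
    set (d := alpha - a0).
    assert (hdN : d * ln N <= 1).
    { assert (E1 : 1 / ln N * ln N = 1) by (field; lra).
      assert (E2 : d <= 1 / ln N) by (unfold d; lra).
      nra. }
    replace alpha with (a0 + d) by (unfold d; ring).
    apply (core p C); try assumption; unfold d; lra.
Qed.
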